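(* Let $L:\mathbb{R}^n\to\mathbb{R}$ be $\mathcal{C}^1$, convex, with a unique minimizer $z_1^*$, $L^*=L(z_1^* )$. Let $\lambda>0$, $\gamma>0$, and let $\psi>0$ be such that $\nu:=\psi(\psi-\lambda)<0$. Define $$V(z):=\gamma(L(z_1)-L^* )+\tfrac12|\psi(z_1-z_1^* )+z_2|^2+\tfrac{\nu}{2}|z_1-z_1^*|^2,\quad z=(z_1,z_2)\in\mathbb{R}^{2n},$$ and let $\dot V(z):=\langle\nabla V(z),(z_2,-\lambda z_2-\gamma\nabla L(z_1))\rangle$. Then for each $z\in\mathbb{R}^{2n}$, $$\dot V(z)\le-\psi\big(a(z_1)+2\nu c(z_1)\big)+2(\psi-\lambda)b(z),$$ where $a(z_1):=\gamma(L(z_1)-L^* )$, $b(z):=\tfrac12|\psi(z_1-z_1^* )+z_2|^2$, $c(z_1):=\tfrac12|z_1-z_1^*|^2$.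
   Context: Convexity means $L(u)\ge L(w)+\langle\nabla L(w),u-w\rangle$ for all $u,w$. *)

(* Defs.v *)
From HB Require Import structures.
From mathcomp Require Import all_boot all_order all_algebra.
From mathcomp Require Import all_classical all_reals all_analysis.
Set Implicit Arguments. Unset Strict Implicit. Unset Printing Implicit Defensive.
Import Order.TTheory GRing.Theory Num.Theory.
Import numFieldNormedType.Exports.
Local Open Scope ring_scope.

Definition dotv {R : realType} {n : nat} (u v : 'rV[R]_n) : R := (u *m v^T) 0 0.

Definition sqnorm {R : realType} {n : nat} (u : 'rV[R]_n) : R := dotv u u.

Definition grad {R : realType} {n : nat} (f : 'rV[R]_n -> R) (z : 'rV[R]_n)
  : 'rV[R]_n := \row_i ('d f z (delta_mx 0 i : 'rV[R]_n)).

Definition C1 {R : realType} {n : nat} (f : 'rV[R]_n -> R) : Prop :=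
  (forall z, differentiable f z) /\ continuous (grad f).

Definition grad_convex {R : realType} {n : nat} (f : 'rV[R]_n -> R) : Prop :=
  forall u w, f w + dotv (grad f w) (u - w) <= f u.

Definition unique_minimizer {R : realType} {n : nat} (f : 'rV[R]_n -> R)
  (z1s : 'rV[R]_n) : Prop :=
  (forall x, f z1s <= f x) /\ (forall x, (forall y, f x <= f y) -> x = z1s).

(* The Lyapunov function V on R^{2n} = 'rV_(n+n), z = (z1, z2) = row_mx z1 z2 *)
Definition Vfun {R : realType} {n : nat} (L : 'rV[R]_n -> R) (z1s : 'rV[R]_n)
  (gamma psi nu : R) (z : 'rV[R]_(n + n)) : R :=
  gamma * (L (lsubmx z) - L z1s)
  + 2^-1 * sqnorm (psi *: (lsubmx z - z1s) + rsubmx z)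
  + nu / 2 * sqnorm (lsubmx z - z1s).

Definition field {R : realType} {n : nat} (L : 'rV[R]_n -> R) (lambda gamma : R)
  (z : 'rV[R]_(n + n)) : 'rV[R]_(n + n) :=
  row_mx (rsubmx z) (- (lambda *: rsubmx z) - gamma *: grad L (lsubmx z)).

Definition Vdot {R : realType} {n : nat} (L : 'rV[R]_n -> R) (z1s : 'rV[R]_n)
  (lambda gamma psi nu : R) (z : 'rV[R]_(n + n)) : R :=
  dotv (grad (Vfun L z1s gamma psi nu) z) (field L lambda gamma z).

(* Main.v *)
Require Import Defs.
From HB Require Import structures.
From mathcomp Require Import all_boot all_order all_algebra.
From mathcomp Require Import all_classical all_reals all_analysis.
From mathcomp Require Import lra.
Import Order.TTheory GRing.Theory Num.Theory.
Import numFieldNormedType.Exports.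
Local Open Scope ring_scope.
Section S.
Variables (R : realType) (V : normedModType R).

Lemma is_diff_sum' m (f df : 'I_m -> V -> R) x :
  (forall i, is_diff x (f i) (df i)) ->
  is_diff x (fun y => \sum_(i < m) f i y) (fun h => \sum_(i < m) df i h).
Proof.
move=> H.
have -> : (fun y => \sum_(i < m) f i y) = \sum_(i < m) f i.
  by rewrite fct_sumE.
have -> : (fun y => \sum_(i < m) df i y) = \sum_(i < m) df i.
  by rewrite fct_sumE.
elim/big_ind2: _ => //.
- have := @is_diff_cst R V R 0 x. by [].
- by move=> ? ? ? ? ? ?; apply: is_diffD.
Qed.

Lemma is_diff_coord n (M : 'rV[R]_n) j :
  is_diff M (fun N : 'rV[R]_n => N 0 j) (fun N => N 0 j).
Proof.
have @f : {linear 'rV[R]_n -> R}.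
  by exists (fun N : 'M[R]_(_, _) => N 0 j); do 2![eexists]; do ?[constructor];
     rewrite ?mxE// => ? *; rewrite ?mxE//; move=> ?; rewrite !mxE.
rewrite (_ : (fun _ => _) = f) //.
apply: DiffDef; first exact/linear_differentiable/coord_continuous.
by rewrite diff_lin //; exact: coord_continuous.
Qed.

Lemma dotvE n (u v : 'rV[R]_n) : dotv u v = \sum_j u 0 j * v 0 j.
Proof. by rewrite /dotv mxE; apply: eq_bigr => j _; rewrite mxE. Qed.

Lemma is_diff_sqnorm n (u du : V -> 'rV[R]_n) x : is_diff x u du ->
  is_diff x (fun y => sqnorm (u y)) (fun h => 2 * dotv (u x) (du h)).
Proof.
move=> Hu.
have Hc j : is_diff x (fun y => u y 0 j) (fun h => du h 0 j).
  have := @is_diff_comp R V _ R u du (fun N => N 0 j) (fun N => N 0 j) x Hu (@is_diff_coord n (u x) j).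
  exact.
have Hm j : is_diff x (fun y => u y 0 j * u y 0 j)
   (fun h => u x 0 j * du h 0 j + u x 0 j * du h 0 j).
  exact: (is_diffM (Hc j) (Hc j)).
have := @is_diff_sum' n (fun j y => u y 0 j * u y 0 j)
   (fun j h => u x 0 j * du h 0 j + u x 0 j * du h 0 j) x Hm.
have -> : (fun y => \sum_(i < n) u y 0 i * u y 0 i) = (fun y => sqnorm (u y)).
  by apply: funext => y; rewrite /sqnorm dotvE.
move=> H; apply: (is_diff_eq H); apply: funext => h.
rewrite dotvE mulr_sumr; apply: eq_bigr => j _; rewrite mulrDl !mul1r //.
Qed.
End S.

Section D.
Variables (R : realType) (n : nat).
Implicit Types u v w : 'rV[R]_n.
Lemma dotvDl u v w : dotv (u + v) w = dotv u w + dotv v w.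
Proof. by rewrite !dotvE -big_split; apply: eq_bigr => j _; rewrite mxE mulrDl. Qed.
Lemma dotvDr u v w : dotv w (u + v) = dotv w u + dotv w v.
Proof. by rewrite !dotvE -big_split; apply: eq_bigr => j _; rewrite mxE mulrDr. Qed.
Lemma dotvZl k u w : dotv (k *: u) w = k * dotv u w.
Proof. by rewrite !dotvE mulr_sumr; apply: eq_bigr => j _; rewrite mxE mulrA. Qed.
Lemma dotvZr k u w : dotv w (k *: u) = k * dotv w u.
Proof. by rewrite !dotvE mulr_sumr; apply: eq_bigr => j _; rewrite mxE mulrCA. Qed.
Lemma dotvNl u w : dotv (- u) w = - dotv u w.
Proof. by rewrite -scaleN1r dotvZl mulN1r. Qed.
Lemma dotvNr u w : dotv w (- u) = - dotv w u.
Proof. by rewrite -scaleN1r dotvZr mulN1r. Qed.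
Lemma dotvBl u v w : dotv (u - v) w = dotv u w - dotv v w.
Proof. by rewrite dotvDl dotvNl. Qed.
Lemma dotvBr u v w : dotv w (u - v) = dotv w u - dotv w v.
Proof. by rewrite dotvDr dotvNr. Qed.
Lemma dotvC u w : dotv u w = dotv w u.
Proof. by rewrite !dotvE; apply: eq_bigr => j _; rewrite mulrC. Qed.
Lemma grad_dot (f : 'rV[R]_n -> R) z h : dotv (grad f z) h = 'd f z h.
Proof.
rewrite dotvE {2}(row_sum_delta h) linear_sum; apply: eq_bigr => j _.
by rewrite linearZ mxE mulrC.
Qed.
End D.

Section M.
Context {R : realType} {n : nat}.
Lemma is_diff_lsub (z : 'rV[R]_(n + n)) : is_diff z lsubmx lsubmx.
Proof.
apply: DiffDef; first exact: differentiable_lsubmx.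
by rewrite diff_lin //; exact: continuous_lsubmx.
Qed.
Lemma is_diff_rsub (z : 'rV[R]_(n + n)) : is_diff z rsubmx rsubmx.
Proof.
apply: DiffDef; first exact: differentiable_rsubmx.
by rewrite diff_lin //; exact: continuous_rsubmx.
Qed.
End M.


Lemma is_diff_ext {R : realType} {V W : normedModType R} {x : V} {f g df dg : V -> W} :
  is_diff x f df -> (forall y, f y = g y) -> (forall h, df h = dg h) -> is_diff x g dg.
Proof.
move=> H /funext <- /funext <-; exact: H.
Qed.

Section V.
Context {R : realType} {n : nat}.
Lemma is_diff_Vfun (L : 'rV[R]_n -> R) (z1s : 'rV[R]_n) (gamma psi nu : R)
  (z : 'rV[R]_(n + n)) : differentiable L (lsubmx z) ->
  is_diff z (Vfun L z1s gamma psi nu)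
   (fun h => gamma * 'd L (lsubmx z) (lsubmx h)
     + 2^-1 * (2 * dotv (psi *: (lsubmx z - z1s) + rsubmx z) (psi *: lsubmx h + rsubmx h))
     + nu / 2 * (2 * dotv (lsubmx z - z1s) (lsubmx h))).
Proof.
move=> dL.
have Hw : is_diff z (fun y : 'rV[R]_(n + n) => lsubmx y - z1s) (fun h => lsubmx h).
  apply: (is_diff_ext (is_diffB (is_diff_lsub z) (is_diff_cst z1s z))) => //= h.
  by rewrite subr0.
have Hv : is_diff z (fun y : 'rV[R]_(n + n) => psi *: (lsubmx y - z1s) + rsubmx y)
    (fun h => psi *: lsubmx h + rsubmx h).
  exact: (is_diff_ext (is_diffD (is_diffZ psi Hw) (is_diff_rsub z))).
have HL : is_diff z (fun y : 'rV[R]_(n + n) => L (lsubmx y)) (fun h => 'd L (lsubmx z) (lsubmx h)).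
  exact: (is_diff_ext (is_diff_comp (is_diff_lsub z) (differentiableP dL))).
have Ha : is_diff z (fun y : 'rV[R]_(n + n) => gamma * (L (lsubmx y) - L z1s))
    (fun h => gamma * 'd L (lsubmx z) (lsubmx h)).
  apply: (is_diff_ext (is_diffZ gamma (is_diffB HL (is_diff_cst (L z1s) z)))) => //= h.
  by rewrite subr0.
have Hb := is_diffZ (2^-1) (@is_diff_sqnorm R _ n _ _ z Hv).
have Hc := is_diffZ (nu / 2) (@is_diff_sqnorm R _ n _ _ z Hw).
exact: (is_diff_ext (is_diffD (is_diffD Ha Hb) Hc)).
Qed.
End V.

Theorem lemma5p2 (R : realType) (n : nat) (L : 'rV[R]_n -> R) (z1s : 'rV[R]_n)
  (lambda gamma psi : R) :
  C1 L -> grad_convex L -> unique_minimizer L z1s ->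
  0 < lambda -> 0 < gamma -> 0 < psi -> psi * (psi - lambda) < 0 ->
  forall z : 'rV[R]_(n + n),
    let nu := psi * (psi - lambda) in
    let a := gamma * (L (lsubmx z) - L z1s) in
    let b := 2^-1 * sqnorm (psi *: (lsubmx z - z1s) + rsubmx z) in
    let c := 2^-1 * sqnorm (lsubmx z - z1s) in
    Vdot L z1s lambda gamma psi nu z <= - psi * (a + 2 * nu * c) + 2 * (psi - lambda) * b.
Proof.
move=> [dL _] conv _ lam0 gam0 psi0 nu0 z /=.
have HV := is_diff_Vfun L z1s gamma psi (psi * (psi - lambda)) z (dL (lsubmx z)).
rewrite /Vdot grad_dot (@diff_val _ _ _ _ _ _ _ HV) /field row_mxKl row_mxKr -grad_dot.
rewrite /sqnorm.
set g := grad L (lsubmx z).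
set x := lsubmx z.
set z2 := rsubmx z.
have cv := conv z1s x; rewrite -/g in cv.
move: cv.
rewrite !(dotvDl, dotvDr, dotvZl, dotvZr, dotvNl, dotvNr, dotvBl, dotvBr).
rewrite ?[dotv z2 x]dotvC ?[dotv z1s x]dotvC ?[dotv z2 z1s]dotvC ?[dotv z2 g]dotvC ?[dotv z1s g]dotvC ?[dotv x g]dotvC.
move=> cv.
have cv' : psi * gamma * (L x - L z1s) <= psi * gamma * (dotv g x - dotv g z1s).
  rewrite ler_pM2l ?mulr_gt0 //; lra.
lra.
Qed.
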